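(* Consider the data-selling model described in the context, with network $G$, prior precision $z_0>0$ and cost $\gamma>0$. Let $C$ be a contract with common precision $z>0$ whose target set $M(C)$ is not an independent set of $G$. For $i\in M(C)$ let $m_i=|N_i\cap M(C)|$. If $$z>\min_{i\in M(C)}\frac{z_0}{1+m_i},$$ then $C$ is not an optimal contract for the seller.
   Context: Model. There is a finite set of buyers $N=\{1,\dots,n\}$ and an undirected network $G$ on $N$: for $i\neq j$, $g_{ij}=g_{ji}\in\{0,1\}$, with $g_{ij}=1$ iff $i$ and $j$ are linked. $N_i=\{j\neq i: g_{ij}=1\}$ is the set of neighbors of $i$. A state $\theta\sim N(0,1/z_0)$ with $z_0>0$ is unknown to all. A contract $C$ of the seller consists of a target set $M(C)\subseteq N$, a common precision $z>0$, and prices $p_i\ge 0$ for $i\in M(C)$ (buyers outside $M(C)$ get nothing and pay nothing). Each $i\in M(C)$ receives a signal $s_i=\theta+\varepsilon_i$, with $\varepsilon_i\sim N(0,1/z)$ independent of $\theta$ and of each other. Each buyer observes the signals of his neighbors in $M(C)$ (and his own if he is in $M(C)$) and then chooses $a_i$ to maximize $E[-(a_i-\theta)^2]$. With $m_i=|N_i\cap M(C)|$, buyer $i\in M(C)$ gets expected payoff $-\frac{1}{z_0+(m_i+1)z}-p_i$. Buyer $i\in M(C)$ accepts iff $p_i\le \frac{1}{z_0+m_iz}-\frac{1}{z_0+(m_i+1)z}$. A contract is feasible if every $i\in M(C)$ accepts. The seller's profit is $\pi(C)=\sum_{i\in M(C)}p_i-\gamma z$ with $\gamma>0$. An optimal contract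 is a feasible contract maximizing $\pi$. An independent set of $G$ is a set of nodes no two of which are linked. *)

(* Defs.v *)
From HB Require Import structures.
From mathcomp Require Import all_boot all_order all_algebra.
From mathcomp Require Import reals.
Set Implicit Arguments. Unset Strict Implicit. Unset Printing Implicit Defensive.
Import Order.TTheory GRing.Theory Num.Theory.
Local Open Scope ring_scope.

Section Model.
Variables (R : realType) (n : nat).

Record contract := Contract {
  target : {set 'I_n};
  prec : R;
  price : 'I_n -> R
}.

Definition simple_graph (g : rel 'I_n) : Prop :=
  symmetric g /\ irreflexive g.

Definition nbrs (g : rel 'I_n) (i : 'I_n) : {set 'I_n} :=
  [set j | (j != i) && g i j].

Definition m_in (g : rel 'I_n) (M : {set 'I_n}) (i : 'I_n) : nat :=
  #|nbrs g i :&: M|.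

(* value of one extra signal to buyer i *)
Definition accept_bound (z0 : R) (g : rel 'I_n) (C : contract) (i : 'I_n) : R :=
  let m := (m_in g (target C) i)%:R in
  (z0 + m * prec C)^-1 - (z0 + (m + 1) * prec C)^-1.

Definition feasible (z0 : R) (g : rel 'I_n) (C : contract) : Prop :=
  0 < prec C /\
  forall i, i \in target C -> 0 <= price C i /\ price C i <= accept_bound z0 g C i.

Definition profit (gamma : R) (C : contract) : R :=
  \sum_(i in target C) price C i - gamma * prec C.

Definition optimal (z0 gamma : R) (g : rel 'I_n) (C : contract) : Prop :=
  feasible z0 g C /\
  forall C', feasible z0 g C' -> profit gamma C' <= profit gamma C.

Definition independent (g : rel 'I_n) (S : {set 'I_n}) : Prop :=
  forall i j, i \in S -> j \in S -> ~~ g i j.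

End Model.

(* Main.v *)
Require Import Defs.
From HB Require Import structures.
From mathcomp Require Import all_boot all_order all_algebra.
From mathcomp Require Import reals ring lra.
Import Order.TTheory GRing.Theory Num.Theory.
Local Open Scope ring_scope.

Lemma key (R : realFieldType) (z0 z b d : R): 0<z0 -> 0<z -> 0<=b -> b+1<=d -> z0 < (1+d)*z ->
 ((z0 + d*z)^-1 - (z0+(d+1)*z)^-1)/d < ((z0+b*z)^-1 - (z0+(b+1)*z)^-1) - ((z0+(b+1)*z)^-1 - (z0+(b+1+1)*z)^-1).
Proof.
move=> z0p zp b0 ad hz.
set u := z0 + b*z. set v := z0 + d*z.
have up : 0 < u by rewrite /u; nra.
have vp : 0 < v by rewrite /v; nra.
have dp : 0 < d by lra.
have E1 : (v^-1 - (z0+(d+1)*z)^-1)/d = z / (d * v * (v+z)).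
  have -> : z0 + (d+1)*z = v + z by rewrite /v; ring.
  field. rewrite /v; apply/and3P; split; apply/negP=>/eqP; nra.
have E2 : (u^-1 - (z0+(b+1)*z)^-1) - ((z0+(b+1)*z)^-1 - (z0+(b+1+1)*z)^-1) = 2*z^+2 / (u*(u+z)*(u+2*z)).
  have -> : z0 + (b+1)*z = u + z by rewrite /u; ring.
  have -> : z0 + (b+1+1)*z = u + 2*z by rewrite /u; ring.
  field. apply/and3P; split; apply/negP=>/eqP; nra.
rewrite E1 E2.
have p1 : 0 < d * v * (v+z) by apply: mulr_gt0; [apply: mulr_gt0|]; lra.
have p2 : 0 < u*(u+z)*(u+2*z) by apply: mulr_gt0; [apply: mulr_gt0|]; lra.
rewrite ltr_pdivrMr // mulrAC ltr_pdivlMr //.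
have uv : u <= v - z by rewrite /u /v; nra.
have h1 : u*(u+z) <= (v-z)*v by apply: ler_pM; lra.
have h2 : u*(u+z)*(u+2*z) <= (v-z)*v*(v+z) by apply: ler_pM; nra.
have h3 : v - z < 2*z*d by rewrite /v; nra.
have h4 : 0 < v*(v+z) by nra.
have : (v-z)*(v*(v+z)) < (2*z*d) * (v*(v+z)) by rewrite ltr_pM2r.
nra.
Qed.

Theorem proposition1 (R : realType) (n : nat) (g : rel 'I_n) (z0 gamma : R)
  (C : contract R n) :
  simple_graph g -> 0 < z0 -> 0 < gamma -> 0 < prec C ->
  ~ independent g (target C) ->
  (* z > min_{i in M(C)} z0 / (1 + m_i) *)
  (exists2 i, i \in target C & z0 / (1 + (m_in g (target C) i)%:R) < prec C) ->
  ~ optimal z0 gamma g C.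
Proof.
move=> [gsym girr] z0p gp zp nind [i0 i0S hi0] [feas opt].
set S := target C in nind i0S hi0 feas opt *.
pose mS j := m_in g S j.
have [i iS imax] : exists2 i, i \in S & forall j, j \in S -> (mS j <= mS i)%N.
  by case: (arg_maxnP mS i0S) => i iS imax; exists i.
pose D := mS i.
have [j [k [jS kS gjk]]] : exists j k, [/\ j \in S, k \in S & g j k].
  case: (pickP (fun p : 'I_n * 'I_n => [&& p.1 \in S, p.2 \in S & g p.1 p.2])) => [[j k] /and3P[] *|H]; first by exists j, k.
  exfalso; apply: nind => j k jS kS; apply/negP=> gjk; move: (H (j,k)); by rewrite /= jS kS gjk.
have Dpos : (1 <= D)%N.
  apply: leq_trans (imax j jS).
  rewrite /mS /m_in card_gt0; apply/set0Pn; exists k.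
  rewrite !inE kS gjk !andbT; apply/eqP => e; move: gjk; rewrite e; by rewrite girr.
have hz : z0 < (1 + D%:R) * prec C.
  have h0 := imax i0 i0S.
  have : z0 < prec C * (1 + (mS i0)%:R) by rewrite -ltr_pdivrMr // ?ltr_pwDl ?ler0n //; lra.
  have : (mS i0)%:R <= D%:R :> R by rewrite ler_nat.
  nra.
pose F (k : nat) : R := (z0 + k%:R * prec C)^-1 - (z0 + (k%:R+1) * prec C)^-1.
have AB : forall C0 j, prec C0 = prec C -> accept_bound z0 g C0 j = F (m_in g (target C0) j).
  by move=> C0 j0 e; rewrite /accept_bound e.
have Fpos : forall k, 0 <= F k.
  move=> k0; rewrite /F subr_ge0 lef_pV2 ?posrE; first nra.
  - have : 0 <= k0%:R :> R by []. nra.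
  - have : 0 <= k0%:R :> R by []. nra.
pose T := S :\ i.
pose C' := Contract T (prec C) (fun j => accept_bound z0 g (Contract T (prec C) (fun _ => 0)) j).
have feas' : feasible z0 g C'.
  split => // j0 _; split; first by rewrite /= AB.
  by rewrite /=.
have := opt C' feas'.
apply/negP; rewrite -ltNge.
rewrite /profit /=.
apply: (@le_lt_trans _ _ (\sum_(j in S) F (mS j) - gamma * prec C)).
  rewrite lerD2r; apply: ler_sum => j0 j0S.
  by rewrite -AB //; case: (feas.2 _ j0S).
rewrite ltrD2r.
under [X in _ < X]eq_bigr => j0 _ do rewrite AB //=.
rewrite (big_setD1 _ iS) /= -/T.
suff H : F D < \sum_(j0 in T) (F (m_in g T j0) - F (mS j0)) by rewrite sumrB in H; lra.
pose N := nbrs g i :&: S.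
have mT : forall j0, j0 \in T -> mS j0 = ((i \in nbrs g j0 :&: S) + m_in g T j0)%N.
  by move=> j0 _; rewrite /mS /m_in /T setIDA; exact: cardsD1.
rewrite (big_setID N) /=.
rewrite [X in _ + X]big1; last first.
  move=> j0; rewrite /T /N !inE => /andP[/negP hN /andP[ji j0S']].
  rewrite (mT j0); last by rewrite /T !inE ji j0S'.
  have : i \notin nbrs g j0 :&: S.
    rewrite /nbrs !inE gsym; apply/negP => /andP[/andP[_ gi] _]; apply: hN.
    by rewrite ji gi j0S'.
  by move/negbTE ->; rewrite add0n subrr.
rewrite addr0.
have -> : T :&: N = N.
  apply/setIidPr; apply/subsetP => x; rewrite /N /T /nbrs !inE => /andP[/andP[xi _] xS].
  by rewrite xi xS.
have cN : #|N| = D by [].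
have Dn0 : D%:R != 0 :> R by rewrite pnatr_eq0 -lt0n.
rewrite [F D](_ : _ = \sum_(j0 in N) (F D / D%:R)); last first.
  by rewrite sumr_const cN -mulr_natr; field.
apply: ltr_sum.
  have : (0 < #|N|)%N by rewrite cN.
  rewrite card_gt0 => /set0Pn [x xN]; apply/hasP; exists x => //.
move=> j0 j0N.
have j0T : j0 \in T.
  by move: j0N; rewrite /N /T /nbrs !inE => /andP[/andP[xi _] xS]; rewrite xi xS.
have iin : i \in nbrs g j0 :&: S.
  move: j0N; rewrite /N /nbrs !inE => /andP[/andP[xi gi] _]; rewrite iS gsym gi andbT.
  by rewrite eq_sym xi.
have e := mT j0 j0T; rewrite iin add1n in e.
have le2 : ((m_in g T j0).+1 <= D)%N by rewrite -e; apply: imax; move: j0T; rewrite /T inE => /andP[].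
rewrite e /F -natr1.
apply: key => //.
by rewrite natr1 ler_nat.
Qed.
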